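(* Let $(Z,Z_{ac})$ be an accretive matrix-ordered vector space and let $((V,V_{ac}),\phi)$ be a $*$-closure of $(Z,Z_{ac})$. Then for all $n$ and $x,y\in M_n(Z)$: (i) $\phi^{(n)}(x)+\phi^{(n)}(y)^*\in V_{ac}^n$ if and only if $x+y\in Z_{ac}^n$; (ii) $\phi^{(n)}(x)+\phi^{(n)}(y)^*=0$ if and only if $x,y\in\operatorname{span}_{\mathbb{C}}Z_{sa}^n$ and $y=-x^*$.
   Context: For a complex vector space $Z$, $M_n(Z)$ is the $n\times n$ matrices over $Z$. A cone is a set $C$ with $C+C\subseteq C$, $tC\subseteq C$ ($t\ge0$). A matrix cone is a sequence of cones $C_n\subseteq M_n(Z)$ with $X^*C_nX\subseteq C_k$ for all scalar $X\in M_{n,k}$; it is $\mathbb{C}$-proper if $C_1\cap-C_1\cap iC_1\cap-iC_1=\{0\}$, and then $(Z,Z_{ac})$, $Z_{ac}=\{Z_{ac}^n\}$, is an accretive matrix-ordered vector space, with $Z_{sa}^n=iZ_{ac}^n\cap-iZ_{ac}^n$ and $Z_+^n=Z_{sa}^n\cap Z_{ac}^n$. For $W=\operatorname{span}_{\mathbb{C}}Z_{sa}^1$, one has $\operatorname{span}_{\mathbb{C}}Z_{sa}^n=M_n(W)$ and there is a unique conjugate-linear involution $*$ on $M_n(W)$ fixing each element of $Z_{sa}^n$, given by $[z_{kl}]^*=[z_{lk}^*]$; this defines $x^*$ in (ii). $(Z,Z_{ac})$ is self-adjoint if $Z=\operatorname{span}_{\mathbb{C}}Z_{sa}^1$ (so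 $Z$ itself carries this involution). A linear map $\phi$ is real-completely positive if $\phi^{(n)}(Z_{ac}^n)\subseteq V_{ac}^n$ for all $n$ ($\phi^{(n)}$ = entrywise application); a real-complete order embedding if injective and both $\phi$ and $\phi^{-1}$ (on the range) are real-completely positive. A $*$-closure of $(Z,Z_{ac})$ is a pair $((V,V_{ac}),\phi)$ with $(V,V_{ac})$ a self-adjoint accretive matrix-ordered vector space, $\phi:Z\to V$ a real-complete order embedding, and $V=\phi(Z)+\phi(Z)^*$ with respect to the involution of $V$. *)

(* Defs.v *)
From HB Require Import structures.
From mathcomp Require Import all_boot all_order all_algebra.
From Stdlib Require Import ClassicalEpsilon.
Set Implicit Arguments. Unset Strict Implicit. Unset Printing Implicit Defensive.
Import Order.TTheory GRing.Theory Num.Theory.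
Local Open Scope ring_scope.

Section AMOS.
Variables (C : numClosedFieldType) (Z : lmodType C).

Definition mscale m n (c : C) (x : 'M[Z]_(m, n)) : 'M[Z]_(m, n) :=
  map_mx (fun z => c *: z) x.

(* X^* x X for a scalar matrix X in M_{n,k}(C) and x in M_n(Z) *)
Definition conj_act n k (X : 'M[C]_(n, k)) (x : 'M[Z]_n) : 'M[Z]_k :=
  \matrix_(i, j) \sum_(p < n) \sum_(q < n) ((Num.conj (X p i)) * X q j) *: x p q.

(* A "matrix family" of subsets: level n.+1 is a subset of M_{n+1}(Z)
   (so index n represents matrix size n+1; sizes range over n >= 1). *)
Definition mfam := forall n : nat, 'M[Z]_n.+1 -> Prop.

Definition is_cone n (P : 'M[Z]_n.+1 -> Prop) : Prop :=
  (forall x y, P x -> P y -> P (x + y)) /\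
  (forall (t : C) x, 0 <= t -> P x -> P (mscale t x)).

Definition matrix_cone (K : mfam) : Prop :=
  (forall n, is_cone (K n)) /\
  (forall n k (X : 'M[C]_(n.+1, k.+1)) x, K n x -> K k (conj_act X x)).

Definition smul_set n (t : C) (P : 'M[Z]_n.+1 -> Prop) (x : 'M[Z]_n.+1) : Prop :=
  exists c, P c /\ x = mscale t c.

Definition C_proper (K : mfam) : Prop :=
  forall x : 'M[Z]_1,
    K 0%N x -> smul_set (-1) (K 0%N) x -> smul_set 'i (K 0%N) x ->
    smul_set (- 'i) (K 0%N) x -> x = 0.

Definition accretive_mos (K : mfam) : Prop := matrix_cone K /\ C_proper K.

Definition Zsa (K : mfam) n (x : 'M[Z]_n.+1) : Prop :=
  smul_set 'i (K n) x /\ smul_set (- 'i) (K n) x.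

Definition Cspan n (P : 'M[Z]_n.+1 -> Prop) (x : 'M[Z]_n.+1) : Prop :=
  exists (k : nat) (c : 'I_k -> C) (v : 'I_k -> 'M[Z]_n.+1),
    (forall i, P (v i)) /\ x = \sum_(i < k) mscale (c i) (v i).

(* The involution on span_C Z_sa^n: the unique conjugate-linear map fixing
   Z_sa^n, i.e. a + i b |-> a - i b for a, b in Z_sa^n (Z_sa^n is a real
   subspace, so span_C Z_sa^n = Z_sa^n + i Z_sa^n). Outside span_C Z_sa^n
   the value is irrelevant (chosen to be x). *)
Definition adj (K : mfam) n (x : 'M[Z]_n.+1) : 'M[Z]_n.+1 :=
  match excluded_middle_informative
          (exists ab : 'M[Z]_n.+1 * 'M[Z]_n.+1,
             Zsa K ab.1 /\ Zsa K ab.2 /\ x = ab.1 + mscale 'i ab.2) with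
  | left h => let ab := proj1_sig (constructive_indefinite_description _ h) in
              ab.1 - mscale 'i ab.2
  | right _ => x
  end.

(* self-adjoint: Z = span_C Z_sa^1 (identifying Z with M_1(Z)) *)
Definition self_adjoint (K : mfam) : Prop :=
  forall z : Z, Cspan (Zsa K (n:=0%N)) (const_mx z : 'M[Z]_1).

End AMOS.

Section Maps.
Variables (C : numClosedFieldType) (Z V : lmodType C).

Definition real_cp (Zac : mfam Z) (Vac : mfam V) (phi : Z -> V) : Prop :=
  forall n (x : 'M[Z]_n.+1), Zac n x -> Vac n (map_mx phi x).

Definition real_coe (Zac : mfam Z) (Vac : mfam V) (phi : Z -> V) : Prop :=
  injective phi /\ real_cp Zac Vac phi /\
  (forall n (x : 'M[Z]_n.+1), Vac n (map_mx phi x) -> Zac n x).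

Definition star_closure (Zac : mfam Z) (Vac : mfam V) (phi : {linear Z -> V}) : Prop :=
  accretive_mos Vac /\ self_adjoint Vac /\ real_coe Zac Vac phi /\
  (forall v : V, exists z1 z2 : Z,
      (const_mx v : 'M[V]_1) =
      const_mx (phi z1) + adj Vac (n:=0%N) (const_mx (phi z2))).
End Maps.

(* Main.v *)
Require Import Defs.
From HB Require Import structures.
From mathcomp Require Import all_boot all_order all_algebra ring.
From Stdlib Require Import ClassicalEpsilon.
Import Order.TTheory GRing.Theory Num.Theory.
Local Open Scope ring_scope.



Section Gen.
Variables (C : numClosedFieldType) (W : lmodType C) (K : mfam W).
Set Implicit Arguments. Unset Strict Implicit. Unset Printing Implicit Defensive.

Lemma msD m n c (x y : 'M[W]_(m,n)) : mscale c (x + y) = mscale c x + mscale c y.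
Proof. by apply/matrixP=> i j; rewrite !mxE scalerDr. Qed.
Lemma msDl m n c d (x : 'M[W]_(m,n)) : mscale (c + d) x = mscale c x + mscale d x.
Proof. by apply/matrixP=> i j; rewrite !mxE scalerDl. Qed.
Lemma msA m n c d (x : 'M[W]_(m,n)) : mscale c (mscale d x) = mscale (c * d) x.
Proof. by apply/matrixP=> i j; rewrite !mxE scalerA. Qed.
Lemma ms1 m n (x : 'M[W]_(m,n)) : mscale 1 x = x.
Proof. by apply/matrixP=> i j; rewrite !mxE scale1r. Qed.
Lemma msN1 m n (x : 'M[W]_(m,n)) : mscale (-1) x = - x.
Proof. by apply/matrixP=> i j; rewrite !mxE scaleN1r. Qed.
Lemma msN m n c (x : 'M[W]_(m,n)) : mscale c (- x) = - mscale c x.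
Proof. by apply/matrixP=> i j; rewrite !mxE scalerN. Qed.
Lemma msNl m n c (x : 'M[W]_(m,n)) : mscale (- c) x = - mscale c x.
Proof. by apply/matrixP=> i j; rewrite !mxE scaleNr. Qed.
Lemma msB m n c (x y : 'M[W]_(m,n)) : mscale c (x - y) = mscale c x - mscale c y.
Proof. by rewrite msD msN. Qed.
Lemma ms0 m n c : mscale c (0 : 'M[W]_(m,n)) = 0.
Proof. by apply/matrixP=> i j; rewrite !mxE scaler0. Qed.
Lemma ms0l m n (x : 'M[W]_(m,n)) : mscale 0 x = 0.
Proof. by apply/matrixP=> i j; rewrite !mxE scale0r. Qed.
Lemma ms_sum m n I r (P : pred I) c (F : I -> 'M[W]_(m,n)) :
  mscale c (\sum_(i <- r | P i) F i) = \sum_(i <- r | P i) mscale c (F i).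
Proof. exact: (big_morph (mscale c) (msD c) (ms0 m n c)). Qed.

Lemma iNi : 'i * - 'i = 1 :> C.
Proof. by rewrite mulrN -expr2 sqrCi opprK. Qed.
Lemma Nii : - 'i * 'i = 1 :> C.
Proof. by rewrite mulNr -expr2 sqrCi opprK. Qed.
Lemma ii : 'i * 'i = -1 :> C.
Proof. by rewrite -expr2 sqrCi. Qed.

Hypothesis Kmc : matrix_cone K.

Lemma Kadd n (x y : 'M[W]_n.+1) : K n x -> K n y -> K n (x + y).
Proof. by case: Kmc => h _; case: (h n) => a _; apply: a. Qed.
Lemma Kscale n (t : C) (x : 'M[W]_n.+1) : 0 <= t -> K n x -> K n (mscale t x).
Proof. by case: Kmc => h _; case: (h n) => _ a; apply: a. Qed.
Lemma Kconj n k (X : 'M[C]_(n.+1, k.+1)) x : K n x -> K k (conj_act X x).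
Proof. by case: Kmc => _ h; apply: h. Qed.

Lemma smulE n (t : C) (x : 'M[W]_n.+1) (s : C) : s * t = 1 ->
  smul_set t (K n) x <-> K n (mscale s x).
Proof.
move=> st; split.
  by case=> c [Kc ->]; rewrite msA st ms1.
move=> h; exists (mscale s x); split => //; rewrite msA.
have -> : t * s = 1 by rewrite mulrC.
by rewrite ms1.
Qed.

Lemma ZsaE n (x : 'M[W]_n.+1) :
  Zsa K x <-> K n (mscale (-'i) x) /\ K n (mscale 'i x).
Proof.
rewrite /Zsa; split.
  by case=> h1 h2; split; [apply/(smulE _ Nii)|apply/(smulE _ iNi)].
by case=> h1 h2; split; [apply/(smulE _ Nii)|apply/(smulE _ iNi)].
Qed.

Lemma ZsaD n (x y : 'M[W]_n.+1) : Zsa K x -> Zsa K y -> Zsa K (x + y).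
Proof.
move=> /ZsaE [a b] /ZsaE [c d]; apply/ZsaE; rewrite !msD.
by split; apply: Kadd.
Qed.
Lemma ZsaN n (x : 'M[W]_n.+1) : Zsa K x -> Zsa K (- x).
Proof.
move=> /ZsaE [a b]; apply/ZsaE; rewrite !msN -!msNl opprK.
by split.
Qed.
Lemma ZsaR n (r : C) (x : 'M[W]_n.+1) : r \is Num.real -> Zsa K x -> Zsa K (mscale r x).
Proof.
move=> /[dup] rR; rewrite realE => /orP [r0|r0] /ZsaE [a b]; apply/ZsaE; rewrite !msA.
  rewrite ![_ * r]mulrC -!msA; split; exact: Kscale.
have -> : - 'i * r = (- r) * 'i by rewrite !mulNr mulrC.
have -> : 'i * r = (- r) * (- 'i) by rewrite mulrNN mulrC.
rewrite -!msA; split; apply: Kscale; rewrite ?oppr_ge0 //.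
Qed.


Lemma conj_actS n k (X : 'M[C]_(n, k)) t (x : 'M[W]_n) :
  conj_act X (mscale t x) = mscale t (conj_act X x).
Proof.
apply/matrixP=> i j; rewrite !mxE scaler_sumr; apply: eq_bigr => p _.
rewrite scaler_sumr; apply: eq_bigr => q _; rewrite !mxE !scalerA.
by rewrite mulrC.
Qed.
Lemma ZsaC n k (X : 'M[C]_(n.+1, k.+1)) x : Zsa K x -> Zsa K (conj_act X x).
Proof.
by move=> /ZsaE [a b]; apply/ZsaE; rewrite -!conj_actS; split; apply: Kconj.
Qed.
End Gen.
Unset Implicit Arguments. Set Strict Implicit.



Section Gen2.
Variables (C : numClosedFieldType) (W : lmodType C) (K : mfam W).
Set Implicit Arguments. Unset Strict Implicit. Unset Printing Implicit Defensive.

Lemma half_zero (u v : W) : u + v = 0 -> u - v = 0 -> u = 0.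
Proof.
move=> h1 h2; have : u + u = 0.
  by rewrite -[RHS](addr0 0) -{1}h1 -h2 addrACA subrr addr0.
rewrite -[u + u]mulr2n -scaler_nat => /eqP.
by rewrite scaler_eq0 pnatr_eq0 /= => /eqP.
Qed.

Lemma sumdelta m (g : 'I_m -> W) p : \sum_r ((r == p)%:R : C) *: g r = g p.
Proof.
rewrite (bigD1 p) //= eqxx scale1r big1 ?addr0 // => r /negbTE ->.
by rewrite scale0r.
Qed.

Section Bform.
Variables (n : nat) (h : 'M[W]_n).
Definition Bf (f g : 'I_n -> C) : W :=
  \sum_p \sum_q (Num.conj (f p) * g q) *: h p q.
Lemma BDl f1 f2 g : Bf (fun p => f1 p + f2 p) g = Bf f1 g + Bf f2 g.
Proof.
rewrite /Bf -big_split; apply: eq_bigr => p _; rewrite -big_split.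
by apply: eq_bigr => q _; rewrite rmorphD mulrDl scalerDl.
Qed.
Lemma BDr f g1 g2 : Bf f (fun q => g1 q + g2 q) = Bf f g1 + Bf f g2.
Proof.
rewrite /Bf -big_split; apply: eq_bigr => p _; rewrite -big_split.
by apply: eq_bigr => q _; rewrite mulrDr scalerDl.
Qed.
Lemma BZl c f g : Bf (fun p => c * f p) g = Num.conj c *: Bf f g.
Proof.
rewrite /Bf scaler_sumr; apply: eq_bigr => p _; rewrite scaler_sumr.
by apply: eq_bigr => q _; rewrite rmorphM scalerA mulrA.
Qed.
Lemma BZr c f g : Bf f (fun q => c * g q) = c *: Bf f g.
Proof.
rewrite /Bf scaler_sumr; apply: eq_bigr => p _; rewrite scaler_sumr.
by apply: eq_bigr => q _; rewrite scalerA mulrCA.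
Qed.
Lemma Bdelta p q : Bf (fun r => (r == p)%:R) (fun r => (r == q)%:R) = h p q.
Proof.
rewrite /Bf (eq_bigr (fun r => (r == p)%:R *: \sum_s ((s == q)%:R : C) *: h r s)).
  by rewrite sumdelta sumdelta.
move=> r _; rewrite scaler_sumr; apply: eq_bigr => s _.
by rewrite conjC_nat scalerA.
Qed.
Lemma Bpolar : (forall f, Bf f f = 0) -> h = 0.
Proof.
move=> Q; apply/matrixP => p q; rewrite mxE.
set dp := (fun r : 'I_n => ((r == p)%:R : C)).
set dq := (fun r : 'I_n => ((r == q)%:R : C)).
have Q1 := Q (fun r => dp r + dq r).
rewrite BDl !BDr Q Q add0r addr0 -/dp -/dq in Q1.
have Q2 := Q (fun r => dp r + 'i * dq r).
rewrite BDl !BDr BZl !BZr Q add0r BZl Q !scaler0 addr0 in Q2.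
rewrite -(Bdelta p q); apply: half_zero; first exact: Q1.
have : - 'i *: ('i *: Bf dp dq + ('i)^* *: Bf dq dp) = 0 by rewrite Q2 scaler0.
by rewrite scalerDr !scalerA Nii conjCi mulrNN -expr2 sqrCi scale1r scaleN1r.
Qed.
End Bform.

Hypothesis Kmc : matrix_cone K.
Hypothesis Kp : C_proper K.

Lemma four0 n (x : 'M[W]_n.+1) : K n x -> K n (- x) -> K n (mscale 'i x) ->
  K n (mscale (- 'i) x) -> x = 0.
Proof.
move=> k1 k2 k3 k4; apply: Bpolar => f.
pose X : 'M[C]_(n.+1, 1) := \matrix_(i, j) f i.
have E : conj_act X x = 0.
  apply: Kp.
  - exact: Kconj.
  - have e : (-1 : C) * -1 = 1 by rewrite mulrNN mulr1.
    by apply/(smulE _ _ e); rewrite -conj_actS msN1; apply: Kconj.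
  - apply/(smulE _ _ (Nii _)); rewrite -conj_actS; exact: Kconj.
  - apply/(smulE _ _ (iNi _)); rewrite -conj_actS; exact: Kconj.
have := congr1 (fun M : 'M[W]_1 => M 0 0) E; rewrite !mxE /Bf => E'; rewrite -[RHS]E'.
by apply: eq_bigr => p _; apply: eq_bigr => q _; rewrite !mxE.
Qed.
End Gen2.
Unset Implicit Arguments. Set Strict Implicit.



Section Gen3.
Variables (C : numClosedFieldType) (W : lmodType C) (K : mfam W).
Set Implicit Arguments. Unset Strict Implicit. Unset Printing Implicit Defensive.
Hypothesis Kmc : matrix_cone K.

Definition Dec n (w : 'M[W]_n.+1) :=
  exists a b, Zsa K a /\ Zsa K b /\ w = a + mscale 'i b.
Definition Dec0 n (w : 'M[W]_n.+1) := w = 0 \/ Dec w.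

Lemma Zsa0 n (h : 'M[W]_n.+1) : Zsa K h -> Zsa K (0 : 'M[W]_n.+1).
Proof. by move=> zh; rewrite -(ms0l h); apply: (ZsaR Kmc) => //; rewrite real0. Qed.

Lemma Zsa_Dec n (h : 'M[W]_n.+1) : Zsa K h -> Dec h.
Proof.
move=> zh; exists h, 0; split => //; split; first exact: Zsa0 zh.
by rewrite ms0 addr0.
Qed.

Lemma DecD n (x y : 'M[W]_n.+1) : Dec x -> Dec y -> Dec (x + y).
Proof.
move=> [a [b [za [zb ->]]]] [c [d [zc [zd ->]]]].
exists (a + c), (b + d); split; first exact: (ZsaD Kmc).
split; first exact: (ZsaD Kmc).
by rewrite msD addrACA.
Qed.

Lemma DecZ n c (x : 'M[W]_n.+1) : Dec x -> Dec (mscale c x).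
Proof.
move=> [a [b [za [zb ->]]]].
exists (mscale ('Re c) a - mscale ('Im c) b), (mscale ('Im c) a + mscale ('Re c) b).
have r1 := ZsaR Kmc (Creal_Re c). have r2 := ZsaR Kmc (Creal_Im c).
split. apply: (ZsaD Kmc). exact: r1 za. exact: (ZsaN (r2 _ _ zb)).
split. apply: (ZsaD Kmc). exact: r2 za. exact: r1 zb.
have e : c * 'i = 'i * 'Re c - 'Im c.
  by rewrite {1}[c]Crect mulrDl mulrAC ii mulN1r mulrC.
rewrite msD !msA e {1}[c]Crect !msDl msNl msD !msA.
by rewrite -!addrA; congr (_ + _); rewrite [RHS]addrC addrA.
Qed.

Lemma Dec0D n (x y : 'M[W]_n.+1) : Dec0 x -> Dec0 y -> Dec0 (x + y).
Proof.
case=> [->|dx]; first by rewrite add0r.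
case=> [->|dy]; first by rewrite addr0; right.
by right; apply: DecD.
Qed.
Lemma Dec0Z n c (x : 'M[W]_n.+1) : Dec0 x -> Dec0 (mscale c x).
Proof. by case=> [->|dx]; [left; rewrite ms0|right; apply: DecZ]. Qed.
Lemma Dec00 n : Dec0 (0 : 'M[W]_n.+1).
Proof. by left. Qed.
Lemma Dec0_sum n I (r : seq I) (P : pred I) (F : I -> 'M[W]_n.+1) :
  (forall i, P i -> Dec0 (F i)) -> Dec0 (\sum_(i <- r | P i) F i).
Proof.
move=> h; apply: (big_ind (@Dec0 n)); [exact: Dec00|exact: Dec0D|exact: h].
Qed.

Lemma Cspan_Dec0 n (x : 'M[W]_n.+1) : Cspan (Zsa K (n:=n)) x -> Dec0 x.
Proof.
move=> [k [c [v [zv ->]]]]; apply: Dec0_sum => i _; apply: Dec0Z.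
by right; apply: Zsa_Dec.
Qed.
End Gen3.
Unset Implicit Arguments. Set Strict Implicit.



Section Gen4.
Variables (C : numClosedFieldType) (W : lmodType C) (K : mfam W).
Set Implicit Arguments. Unset Strict Implicit. Unset Printing Implicit Defensive.

Lemma adj_gen n (w : 'M[W]_n.+1) :
  (exists a b, Zsa K a /\ Zsa K b /\ w = a + mscale 'i b /\ adj K w = a - mscale 'i b)
  \/ ((~ exists a b, Zsa K a /\ Zsa K b /\ w = a + mscale 'i b) /\ adj K w = w).
Proof.
rewrite /adj; case: excluded_middle_informative => [h|nh]; last first.
  right; split => // [[a [b [za [zb e]]]]]; apply: nh; by exists (a, b).
left; case: (constructive_indefinite_description _ h) => [[a b]] /= [za [zb e]].
by exists a, b.
Qed.

Hypothesis Kmc : matrix_cone K.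
Hypothesis Kp : C_proper K.

Lemma Zsa_i0 n (h : 'M[W]_n.+1) : Zsa K h -> Zsa K (mscale 'i h) -> h = 0.
Proof.
move=> /ZsaE [k1 k2] /ZsaE [k3 k4]; rewrite !msA Nii ms1 ii msN1 in k3 k4.
exact: (four0 Kmc Kp k3 k4 k2 k1).
Qed.

Lemma dec_uniq n (a1 b1 a2 b2 : 'M[W]_n.+1) : Zsa K a1 -> Zsa K b1 ->
  Zsa K a2 -> Zsa K b2 -> a1 + mscale 'i b1 = a2 + mscale 'i b2 ->
  a1 = a2 /\ b1 = b2.
Proof.
move=> z1 z2 z3 z4 e.
have e2 : mscale 'i (b2 - b1) = a1 - a2.
  have t : (a2 + mscale 'i b2) - (a2 + mscale 'i b1) = mscale 'i b2 - mscale 'i b1.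
    by rewrite opprD addrACA subrr add0r.
  by rewrite msB -t -e opprD addrACA subrr addr0.
have hb : b2 - b1 = 0.
  apply: Zsa_i0; first by apply: (ZsaD Kmc) => //; apply: ZsaN.
  by rewrite e2; apply: (ZsaD Kmc) => //; apply: ZsaN.
move/eqP: hb; rewrite subr_eq0 => /eqP hb.
by move: e2; rewrite hb subrr ms0 => /eqP; rewrite eq_sym subr_eq0 => /eqP.
Qed.

Lemma adj_dec n (a b : 'M[W]_n.+1) : Zsa K a -> Zsa K b ->
  adj K (a + mscale 'i b) = a - mscale 'i b.
Proof.
move=> za zb; case: (adj_gen (a + mscale 'i b)) => [[c [d [zc [zd [e ->]]]]]|[nh _]].
  by case: (dec_uniq za zb zc zd e) => -> ->.
by case: nh; exists a, b.
Qed.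

Lemma adj0 n : adj K (0 : 'M[W]_n.+1) = 0.
Proof.
case: (adj_gen (0 : 'M[W]_n.+1)) => [[a [b [za [zb [e ->]]]]]|[_ ->]] //.
have hb : b = 0.
  apply: Zsa_i0 => //; have -> : mscale 'i b = - a.
    by apply/eqP; rewrite -addr_eq0 addrC -e.
  exact: ZsaN.
by move: e; rewrite hb ms0 !addr0 => <-; rewrite subr0.
Qed.

Lemma adj_sub n (u w : 'M[W]_n.+1) :
  (K n (u + adj K w) <-> K n (u + w)).
Proof.
case: (adj_gen w) => [[a [b [za [zb [e ->]]]]]|[_ ->]] //.
move/ZsaE: zb => [k1 k2].
have E1 : u + w = (u + (a - mscale 'i b)) + mscale 'i b + mscale 'i b.
  by rewrite e -!addrA addKr.
have E2 : u + (a - mscale 'i b) = (u + w) + mscale (- 'i) b + mscale (- 'i) b.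
  by rewrite e msNl -!addrA addNKr.
split => h.
  by rewrite E1; apply: (Kadd Kmc) => //; apply: (Kadd Kmc).
by rewrite E2; apply: (Kadd Kmc) => //; apply: (Kadd Kmc).
Qed.
End Gen4.
Unset Implicit Arguments. Set Strict Implicit.



Section Gen5.
Variables (C : numClosedFieldType) (W : lmodType C) (K : mfam W).
Set Implicit Arguments. Unset Strict Implicit. Unset Printing Implicit Defensive.
Hypothesis Kmc : matrix_cone K.

Definition Emat n (p q : 'I_n.+1) (u : W) : 'M[W]_n.+1 :=
  \matrix_(i, j) ((((i == p)%:R * (j == q)%:R) : C) *: u).

Lemma Eunit n (v : 'M[W]_1) (p q : 'I_n.+1) : Zsa K v -> Dec0 K (Emat p q (v 0 0)).
Proof.
move=> zv.
pose M (f : 'I_n.+1 -> C) := conj_act (\row_j f j : 'M[C]_(1, n.+1)) v.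
have zM : forall f, Zsa K (M f) by move=> f; apply: (ZsaC Kmc).
pose dp := (fun r : 'I_n.+1 => ((r == p)%:R : C)).
pose dq := (fun r : 'I_n.+1 => ((r == q)%:R : C)).
pose A := M (fun r => dp r + dq r) - M dp - M dq.
pose B := M (fun r => dp r + 'i * dq r) - M dp - M dq.
have zA : Zsa K A by apply: (ZsaD Kmc); [apply: (ZsaD Kmc) => //; apply: ZsaN|apply: ZsaN].
have zB : Zsa K B by apply: (ZsaD Kmc); [apply: (ZsaD Kmc) => //; apply: ZsaN|apply: ZsaN].
right; exists (mscale 2^-1 A), (mscale (- 2^-1) B); split.
  by apply: (ZsaR Kmc) => //; rewrite rpredV realn.
split; first by apply: (ZsaR Kmc) => //; rewrite rpredN rpredV realn.
apply/matrixP => r s; rewrite !mxE !big_ord1 !mxE.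
rewrite -!scalerBl !scalerA -scalerDl; congr (_ *: _).
have cD : forall x y : C, (x + y)^* = x^* + y^* by move=> x y; rewrite rmorphD.
have cM : forall x y : C, (x * y)^* = x^* * y^* by move=> x y; rewrite rmorphM.
rewrite /dp /dq !cD !cM !conjC_nat conjCi.
move: ((r == p)%:R : C) ((r == q)%:R : C) ((s == p)%:R : C) ((s == q)%:R : C) (ii C).
move: ('i : C) => j a b c d hj.
apply/eqP; rewrite -subr_eq0; apply/eqP.
set L := (X in X = 0).
have -> : L = 2^-1 * (a * d - b * c - j * b * d) * (1 + j * j).
  by rewrite /L; field.
by rewrite hj subrr mulr0.
Qed.

Hypothesis SA : self_adjoint K.

Lemma all_Dec0 n (w : 'M[W]_n.+1) : Dec0 K w.
Proof.
have -> : w = \sum_p \sum_q Emat p q (w p q).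
  apply/matrixP => r s; rewrite summxE.
  rewrite (eq_bigr (fun p => ((p == r)%:R : C) *: w p s)).
    by rewrite sumdelta.
  move=> p _; rewrite summxE.
  rewrite (eq_bigr (fun q => ((p == r)%:R : C) *: (((q == s)%:R : C) *: w p q))).
    by rewrite -scaler_sumr sumdelta.
  by move=> q _; rewrite !mxE scalerA (eq_sym r) (eq_sym s).
apply: (Dec0_sum Kmc) => p _; apply: (Dec0_sum Kmc) => q _.
case: (SA (w p q)) => k [c [v [zv e]]].
have -> : w p q = \sum_i c i *: v i 0 0.
  have := congr1 (fun M : 'M[W]_1 => M 0 0) e; rewrite !mxE summxE => ->.
  by apply: eq_bigr => i _; rewrite mxE.
have -> : Emat p q (\sum_i c i *: v i 0 0) = \sum_i mscale (c i) (Emat p q (v i 0 0)).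
  apply/matrixP => r s; rewrite summxE !mxE scaler_sumr; apply: eq_bigr => i _.
  by rewrite !mxE !scalerA mulrC.
apply: (Dec0_sum Kmc) => i _; apply: (Dec0Z Kmc). exact: (Eunit p q (zv i)).
Qed.
End Gen5.
Unset Implicit Arguments. Set Strict Implicit.



Section Maps.
Variables (C : numClosedFieldType) (Z V : lmodType C) (phi : {linear Z -> V}).
Set Implicit Arguments. Unset Strict Implicit. Unset Printing Implicit Defensive.

Lemma mapD n (x y : 'M[Z]_n) : map_mx phi (x + y) = map_mx phi x + map_mx phi y.
Proof. by apply/matrixP => i j; rewrite !mxE linearD. Qed.
Lemma mapN n (x : 'M[Z]_n) : map_mx phi (- x) = - map_mx phi x.
Proof. by apply/matrixP => i j; rewrite !mxE linearN. Qed.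
Lemma map0 n : map_mx phi (0 : 'M[Z]_n) = 0.
Proof. by apply/matrixP => i j; rewrite !mxE linear0. Qed.
Lemma mapS n c (x : 'M[Z]_n) : map_mx phi (mscale c x) = mscale c (map_mx phi x).
Proof. by apply/matrixP => i j; rewrite !mxE linearZ. Qed.
Lemma map_inj n : injective phi -> injective (@map_mx _ _ phi n n).
Proof.
move=> inj x y e; apply/matrixP => i j; apply: inj.
by have := congr1 (fun M : 'M[V]_n => M i j) e; rewrite !mxE.
Qed.

Lemma Zsa_map (Zac : mfam Z) (Vac : mfam V) n (x : 'M[Z]_n.+1) :
  real_coe Zac Vac phi -> (Zsa Zac x <-> Zsa Vac (map_mx phi x)).
Proof.
move=> [_ [cp rf]]; rewrite ZsaE ZsaE -!mapS; split.
  by case=> h1 h2; split; apply: cp.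
by case=> h1 h2; split; apply: rf.
Qed.
End Maps.
Unset Implicit Arguments. Set Strict Implicit.

Lemma Cspan2 (C : numClosedFieldType) (W : lmodType C) n (P : 'M[W]_n.+1 -> Prop)
  a b s t : P a -> P b -> Cspan P (mscale s a + mscale t b).
Proof.
move=> pa pb; exists 2%N, (fun i : 'I_2 => if val i == 0%N then s else t).
exists (fun i : 'I_2 => if val i == 0%N then a else b); split.
  by move=> i; case: ifP.
by rewrite big_ord_recl big_ord_recl big_ord0 addr0.
Qed.

Lemma Cspan0 (C : numClosedFieldType) (W : lmodType C) n (P : 'M[W]_n.+1 -> Prop) :
  Cspan P 0.
Proof.
exists 0%N, (fun _ => 0), (fun _ => 0); split; first by case.
by rewrite big_ord0.
Qed.

Lemma msH (C : numClosedFieldType) (W : lmodType C) m n (w : 'M[W]_(m, n)) :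
  mscale 2^-1 (w + w) = w.
Proof.
rewrite -{1 2}(ms1 w) -msDl msA mulVf ?ms1 //.
by rewrite (pnatr_eq0 C 2).
Qed.

Theorem lemma2p8 (C : numClosedFieldType) (Z V : lmodType C)
  (Zac : mfam Z) (Vac : mfam V) (phi : {linear Z -> V}) :
  accretive_mos Zac -> star_closure Zac Vac phi ->
  forall (n : nat) (x y : 'M[Z]_n.+1),
    (Vac n (map_mx phi x + adj Vac (map_mx phi y)) <-> Zac n (x + y)) /\
    (map_mx phi x + adj Vac (map_mx phi y) = 0 <->
       Cspan (Zsa Zac (n:=n)) x /\ Cspan (Zsa Zac (n:=n)) y /\ y = - adj Zac x).
Proof.
move=> [Zmc Zp] [[Vmc Vp] [SA [coe _]]] n x y.
have coe' := coe; case: coe' => [inj [cp rf]].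
split.
  rewrite (adj_sub Vmc) -mapD; split; [exact: rf|exact: cp].
split.
  move=> e.
  case: (all_Dec0 Vmc SA (map_mx phi y)) => [hy|[a [b [za [zb ey]]]]].
    have y0 : y = 0 by apply: (map_inj inj); rewrite hy map0.
    move: e; rewrite hy (adj0 Vmc Vp) addr0 => hx.
    have x0 : x = 0 by apply: (map_inj inj); rewrite hx map0.
    by rewrite x0 y0 (adj0 Zmc Zp) oppr0; split; [|split]; try exact: Cspan0.
  rewrite ey (adj_dec Vmc Vp za zb) in e.
  have ex : map_mx phi x = mscale 'i b - a.
    by apply/eqP; rewrite -opprB -addr_eq0 e.
  pose a' := mscale 2^-1 (y - x).
  pose b' := mscale (-'i) (mscale 2^-1 (x + y)).
  have ma : map_mx phi a' = a.
    rewrite /a' mapS mapD mapN ey ex opprB.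
    by rewrite addrACA subrr addr0 msH.
  have mb : map_mx phi b' = b.
    rewrite /b' !mapS mapD ex ey addrA subrK msH.
    by rewrite msA Nii ms1.
  have za' : Zsa Zac a' by apply/(Zsa_map _ coe); rewrite ma.
  have zb' : Zsa Zac b' by apply/(Zsa_map _ coe); rewrite mb.
  have ib : mscale 'i b' = mscale 2^-1 (x + y) by rewrite /b' msA iNi ms1.
  have xd : x = mscale (-1) a' + mscale 'i b'.
    rewrite ib msN1 /a' -msN opprB -msD.
    by rewrite addrACA addNr addr0 msH.
  have yd : y = a' + mscale 'i b'.
    by rewrite ib /a' -msD -addrA addKr msH.
  split; first by rewrite xd; apply: Cspan2.
  split; first by rewrite yd -{1}(ms1 a'); apply: Cspan2.
  rewrite {1}yd xd msN1 (adj_dec Zmc Zp (ZsaN za') zb').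
  by rewrite opprD !opprK.
move=> [cx [cy ey]].
case: (Cspan_Dec0 Zmc cx) => [x0|[a [b [za [zb ex]]]]].
  by rewrite ey x0 (adj0 Zmc Zp) oppr0 map0 (adj0 Vmc Vp) addr0.
have ey' : y = - a + mscale 'i b.
  by rewrite ey ex (adj_dec Zmc Zp za zb) opprB addrC.
have zma : Zsa Vac (map_mx phi (- a)) by apply/(Zsa_map _ coe); exact: ZsaN.
have zmb : Zsa Vac (map_mx phi b) by apply/(Zsa_map _ coe).
rewrite ey' ex mapD (mapD phi (- a)) mapS (adj_dec Vmc Vp zma zmb) mapN.
by rewrite addrACA !subrr addr0.
Qed.
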